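(* Let $(X,\le)$ be a poset and $E$ an equivalence relation on $X$ with ${\le}\subseteq E$. Let $\alpha:X\to X$ be an order automorphism of $(X,\le)$ and $\beta:X\to X$ a self-inverse dual order automorphism of $(X,\le)$ such that $\alpha,\beta\subseteq E$ and $\beta=\alpha\circ\beta\circ\alpha$. Then for all $n\in\omega$: (i) $\alpha^n\circ\beta$ and $\beta\circ\alpha^n$ are dual order automorphisms of $(X,\le)$; (ii) $\alpha^n\circ\beta\subseteq E$ and $\beta\circ\alpha^n\subseteq E$; (iii) $\alpha^n\circ\beta$ and $\beta\circ\alpha^n$ are self-inverse; (iv) $\alpha\circ(\alpha^n\circ\beta)\circ\alpha=\alpha^n\circ\beta$ and $\alpha\circ(\beta\circ\alpha^n)\circ\alpha=\beta\circ\alpha^n$.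
   Context: Functions $X\to X$ are identified with their graphs $\{(x,\gamma(x))\}$ and composed as relations: $R\circ S=\{(x,y)\mid\exists z\,((x,z)\in R,(z,y)\in S)\}$; $\alpha^0=\mathrm{id}_X$, $\alpha^{k+1}=\alpha^k\circ\alpha$. Order automorphism: bijection with $x\le y\iff\alpha(x)\le\alpha(y)$; dual order automorphism: bijection with $x\le y\iff\beta(y)\le\beta(x)$; self-inverse: $\gamma\circ\gamma=\mathrm{id}_X$. *)

(* Defs.v *)
(* Functions are identified with their graphs and composed as relations:
   R o S = {(x,y) | exists z, (x,z) in R, (z,y) in S}.  For graphs of
   functions this is diagrammatic composition: first f, then g. *)
Definition rcomp {X : Type} (f g : X -> X) : X -> X := fun x => g (f x).

Fixpoint fpow {X : Type} (f : X -> X) (n : nat) : X -> X :=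
  match n with
  | O => fun x => x
  | S k => rcomp (fpow f k) f
  end.

(* equality of graphs of functions = pointwise equality *)
Definition feq {X : Type} (f g : X -> X) : Prop := forall x, f x = g x.

Definition is_poset {X : Type} (le : X -> X -> Prop) : Prop :=
  (forall x, le x x) /\
  (forall x y, le x y -> le y x -> x = y) /\
  (forall x y z, le x y -> le y z -> le x z).

Definition is_equivalence {X : Type} (E : X -> X -> Prop) : Prop :=
  (forall x, E x x) /\
  (forall x y, E x y -> E y x) /\
  (forall x y z, E x y -> E y z -> E x z).

Definition rel_sub {X : Type} (R E : X -> X -> Prop) : Prop :=
  forall x y, R x y -> E x y.

(* graph of f is a subset of E *)
Definition fun_sub {X : Type} (f : X -> X) (E : X -> X -> Prop) : Prop :=
  forall x, E x (f x).

Definition is_bijection {X : Type} (f : X -> X) : Prop :=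
  (forall x y, f x = f y -> x = y) /\ (forall y, exists x, f x = y).

Definition order_aut {X : Type} (le : X -> X -> Prop) (f : X -> X) : Prop :=
  is_bijection f /\ (forall x y, le x y <-> le (f x) (f y)).

Definition dual_order_aut {X : Type} (le : X -> X -> Prop) (f : X -> X) : Prop :=
  is_bijection f /\ (forall x y, le x y <-> le (f y) (f x)).

Definition self_inverse {X : Type} (f : X -> X) : Prop :=
  feq (rcomp f f) (fun x => x).

(* Main.v *)
Require Import Defs.
From Stdlib Require Import Setoid.

Lemma fpow_S {X} (a : X -> X) (m : nat) (x : X) : fpow a (S m) x = a (fpow a m x).
Proof. reflexivity. Qed.

Lemma fpow_comm {X} (a : X -> X) (n : nat) (x : X) : fpow a n (a x) = a (fpow a n x).
Proof. induction n; simpl; unfold rcomp; [reflexivity| rewrite <- IHn; reflexivity]. Qed.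

Lemma fpow_le {X} (le : X -> X -> Prop) (a : X -> X) :
  (forall x y, le x y <-> le (a x) (a y)) ->
  forall n x y, le x y <-> le (fpow a n x) (fpow a n y).
Proof. intros H n; induction n; intros x y; simpl; unfold rcomp; [tauto|].
  rewrite IHn. apply H. Qed.

Lemma fpow_E {X} (E : X -> X -> Prop) (a : X -> X) :
  is_equivalence E -> fun_sub a E -> forall n x, E x (fpow a n x).
Proof. intros [R [S T]] H n; induction n; intros x; simpl; unfold rcomp; [apply R|].
  eapply T; [apply IHn| apply H]. Qed.

Lemma key {X} (a b : X -> X) :
  (forall x, b x = a (b (a x))) -> forall n x, fpow a n (b (fpow a n x)) = b x.
Proof. intros H n; induction n; intros x; [reflexivity|].
  rewrite !fpow_S, <- fpow_comm, <- H. apply IHn. Qed.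

Lemma selfinv_bij {X} (g : X -> X) : (forall x, g (g x) = x) -> is_bijection g.
Proof. intros H; split.
  - intros x y Hxy. rewrite <- (H x), <- (H y), Hxy. reflexivity.
  - intros y. exists (g y). apply H. Qed.

Theorem lemma3p19 (X : Type) (le E : X -> X -> Prop) (alpha beta : X -> X) :
  is_poset le ->
  is_equivalence E ->
  rel_sub le E ->
  order_aut le alpha ->
  dual_order_aut le beta ->
  self_inverse beta ->
  fun_sub alpha E ->
  fun_sub beta E ->
  feq beta (rcomp (rcomp alpha beta) alpha) ->
  forall n : nat,
    (dual_order_aut le (rcomp (fpow alpha n) beta) /\
     dual_order_aut le (rcomp beta (fpow alpha n))) /\
    (fun_sub (rcomp (fpow alpha n) beta) E /\
     fun_sub (rcomp beta (fpow alpha n)) E) /\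
    (self_inverse (rcomp (fpow alpha n) beta) /\
     self_inverse (rcomp beta (fpow alpha n))) /\
    (feq (rcomp (rcomp alpha (rcomp (fpow alpha n) beta)) alpha)
         (rcomp (fpow alpha n) beta) /\
     feq (rcomp (rcomp alpha (rcomp beta (fpow alpha n))) alpha)
         (rcomp beta (fpow alpha n))).
Proof.
  intros Hpo HE Hsub [_ Ha] [_ Hb] Hbi HaE HbE Hab n.
  unfold self_inverse, feq, rcomp in Hbi, Hab.
  pose proof (key alpha beta Hab n) as K.
  pose proof (fpow_le le alpha Ha n) as L.
  pose proof (fpow_E E alpha HE HaE n) as F.
  destruct HE as [R [S T]].
  assert (G1 : forall x, beta (fpow alpha n (beta (fpow alpha n x))) = x).
  { intros x. rewrite K. apply Hbi. }
  assert (G2 : forall x, fpow alpha n (beta (fpow alpha n (beta x))) = x).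
  { intros x. rewrite K. apply Hbi. }
  unfold dual_order_aut, fun_sub, self_inverse, feq, rcomp.
  split; [split|split; [split|split; split]].
  - split; [apply selfinv_bij; exact G1|].
    intros x y. rewrite L. apply Hb.
  - split; [apply selfinv_bij; exact G2|].
    intros x y. rewrite <- L. apply Hb.
  - intros x. eapply T; [apply F|apply HbE].
  - intros x. eapply T; [apply HbE|apply F].
  - exact G1.
  - exact G2.
  - intros x. rewrite fpow_comm. symmetry. apply Hab.
  - intros x. rewrite <- fpow_comm, <- Hab. reflexivity.
Qed.
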